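(* Let $N_1,N_2$ be free abelian groups of rank $n$ and $\Sigma_1\subset(N_1)_{\mathbf R}$, $\Sigma_2\subset(N_2)_{\mathbf R}$ amply equivalent complete fans with bijection $\Psi:\Sigma_1(1)\to\Sigma_2(1)$ preserving primitive collections and relations among ray generators. Then there is a $\mathbf Q$-linear isomorphism $\Phi:(N_1)_{\mathbf Q}\to(N_2)_{\mathbf Q}$ such that (1) $\Phi(u_\rho)=u_{\Psi(\rho)}$ for all $\rho\in\Sigma_1(1)$; (2) if $\Phi_{\mathbf R}$ is its $\mathbf R$-linear extension, a cone $\sigma_1\subset(N_1)_{\mathbf R}$ is a cone of $\Sigma_1$ if and only if $\Phi_{\mathbf R}(\sigma_1)$ is a cone of $\Sigma_2$. Moreover, (3) $\Phi$ induces an isomorphism $\Gamma(G_1)_{\mathbf Q}\cong\Gamma(G_2)_{\mathbf Q}$, namely the unique map $\varphi$ making the diagram with exact rows $0\to\Gamma(G_i)_{\mathbf Q}\to\mathbf Q^{\Sigma(1)}\to(N_i)_{\mathbf Q}\to0$ ($i=1,2$), identity in the middle and $\Phi$ on the right, commute.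
   Context: For a fan $\Sigma$: rays $\Sigma(1)$, primitive generators $u_\rho$. A primitive collection is $C\subset\Sigma(1)$ not contained in $\sigma(1)$ for any cone $\sigma$ while every proper subset is. Complete fans $\Sigma_1\subset(N_1)_{\mathbf R},\Sigma_2\subset(N_2)_{\mathbf R}$ (equal ranks) are amply equivalent via a bijection $\Psi:\Sigma_1(1)\to\Sigma_2(1)$ if $C$ is a primitive collection of $\Sigma_1$ iff $\Psi(C)$ is one of $\Sigma_2$, and for all integers $(a_\rho)_{\rho\in\Sigma_1(1)}$, $\sum a_\rho u_\rho=0\iff\sum a_\rho u_{\Psi(\rho)}=0$. $G_i=\mathrm{Hom}(\mathrm{Cl}(X_{\Sigma_i}),\mathbf C^\times)$, and $\Gamma(G_i)=\{b\in\mathbf Z^{\Sigma_i(1)}:\sum b_\rho u_\rho=0\}$ is its group of one-parameter subgroups. $\mathbf Q^{\Sigma(1)}$ denotes $\mathbf Q^{\Sigma_1(1)}$ identified with $\mathbf Q^{\Sigma_2(1)}$ via $\Psi$, with maps $e_\rho\mapsto u_\rho$ onto $(N_1)_{\mathbf Q}$ and $e_\rho\mapsto u_{\Psi(\rho)}$ onto $(N_2)_{\mathbf Q}$. *)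

(* Defs.v *)
From mathcomp Require Import all_boot all_order all_algebra.
From mathcomp Require Import classical_sets reals.
Set Implicit Arguments. Unset Strict Implicit. Unset Printing Implicit Defensive.
Import Order.TTheory GRing.Theory Num.Theory.
Local Open Scope ring_scope.

(* The lattice N is modelled as Z^n = 'rV[int]_n; a fan is given by a finite
   index type I of rays, their primitive generators u : I -> 'rV[int]_n and
   the set of its cones, each cone being recorded by its set of rays. *)

Definition intv (K : nzRingType) n (v : 'rV[int]_n) : 'rV[K]_n :=
  map_mx (fun z : int => z%:~R) v.

Definition coneR (R : realType) n (I : finType) (u : I -> 'rV[int]_n)
  (S : {set I}) : set 'rV[R]_n :=
  (fun x => exists a : I -> R, (forall i, 0 <= a i) /\
     (forall i, i \notin S -> a i = 0) /\ x = \sum_i a i *: intv R (u i)).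

Arguments coneR R {n I} u S _.

Definition dotR (R : realType) n (x m : 'rV[R]_n) : R := (x *m m^T) 0 0.

Definition is_face (R : realType) n (s F : set 'rV[R]_n) : Prop :=
  exists m : 'rV[R]_n, (forall x, s x -> 0 <= dotR x m) /\
    F = setI s (fun x => dotR x m = 0).

Definition strongly_convex (R : realType) n (s : set 'rV[R]_n) : Prop :=
  forall x, s x -> s (- x) -> x = 0.

Definition primitive_vec n (v : 'rV[int]_n) : Prop :=
  v != 0 /\ forall (k : int) (w : 'rV[int]_n), v = k *: w -> `|k| = 1.

(** (u, cones) is a complete fan in R^n whose set of rays is indexed by I,
    with u i the primitive generator of the ray i, and every cone is
    Cone(u_i : i in S) for S in cones, S being exactly its set of rays. *)
Definition is_complete_fan (R : realType) n (I : finType)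
  (u : I -> 'rV[int]_n) (cones : {set {set I}}) : Prop :=
  injective u /\
  (forall i, primitive_vec (u i)) /\
  (forall i, [set i] \in cones) /\
  (forall S, S \in cones -> forall i, i \in S <-> coneR R u S (intv R (u i))) /\
  (forall S, S \in cones -> strongly_convex (coneR R u S)) /\
  (forall S F, S \in cones -> is_face (coneR R u S) F ->
      exists2 T, T \in cones & F = coneR R u T) /\
  (forall S T, S \in cones -> T \in cones ->
      is_face (coneR R u S) (setI (coneR R u S) (coneR R u T)) /\
      is_face (coneR R u T) (setI (coneR R u S) (coneR R u T))) /\
  (forall x : 'rV[R]_n, exists2 S, S \in cones & coneR R u S x).

Arguments is_complete_fan R {n I} u cones.

Definition cone_of (R : realType) n (I : finType) (u : I -> 'rV[int]_n)
  (cones : {set {set I}}) (C : set 'rV[R]_n) : Prop :=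
  exists2 S, S \in cones & C = coneR R u S.

Definition primitive_collection (I : finType) (cones : {set {set I}})
  (C : {set I}) : Prop :=
  (forall S, S \in cones -> ~~ (C \subset S)) /\
  (forall C' : {set I}, C' \proper C -> exists2 S, S \in cones & C' \subset S).

(* Main.v *)
Require Import Defs.
From mathcomp Require Import all_boot all_order all_algebra.
From mathcomp Require Import classical_sets reals.
Import Order.TTheory GRing.Theory Num.Theory.
Set Implicit Arguments. Unset Strict Implicit.
Local Open Scope ring_scope.

Definition Kb (I : finType) (cones : {set {set I}}) (A : {set I}) : bool :=
  [exists S in cones, A \subset S].

Lemma prim_of_notK (I : finType) (cones : {set {set I}}) (A : {set I}) :
  ~~ Kb cones A -> exists2 C, primitive_collection cones C & C \subset A.
Proof.
move: {2}#|A|.+1 (ltnSn #|A|) => N; elim: N A => // N IH A hA nK.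
case: (boolP [forall B : {set I}, (B \proper A) ==> Kb cones B]) => hB.
  exists A => //; split.
    move=> S SC; apply/negP => AS; move/negP: nK; apply.
    by apply/existsP; exists S; rewrite SC.
  move=> C' /(implyP (forallP hB C')) /existsP [S /andP [SC CS]].
  by exists S.
move: hB; rewrite negb_forall => /existsP [B]; rewrite negb_imply => /andP [BA nKB].
have hBN : (#|B| < N)%N by rewrite (leq_trans (proper_card BA)) // -ltnS.
have [C PC CB] := IH B hBN nKB.
exists C; first exact: PC.
exact: (fintype.subset_trans CB (proper_sub BA)).
Qed.

Lemma K_prim (I : finType) (cones : {set {set I}}) (A C : {set I}) :
  Kb cones A -> primitive_collection cones C -> ~~ (C \subset A).
Proof.
move=> /existsP [S /andP [SC AS]] [H _]; apply/negP => CA.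
by move/negP: (H S SC); apply; apply: fintype.subset_trans CA AS.
Qed.

Lemma imsetKK (aT rT : finType) (f : aT -> rT) (g : rT -> aT) (A : {set aT}) :
  cancel f g -> g @: (f @: A) = A.
Proof.
move=> fK; rewrite -imset_comp.
rewrite (eq_imset (g := id)); first by rewrite imset_id.
by move=> x /=; rewrite fK.
Qed.

Lemma Kb_transfer (I1 I2 : finType) (cones1 : {set {set I1}}) (cones2 : {set {set I2}})
  (Psi : I1 -> I2) (Psi' : I2 -> I1) :
  cancel Psi Psi' -> cancel Psi' Psi ->
  (forall C : {set I1},
      primitive_collection cones1 C <-> primitive_collection cones2 (Psi @: C)) ->
  forall A, Kb cones1 A = Kb cones2 (Psi @: A).
Proof.
move=> K1 K2 hP A; apply/idP/idP => hK.
  move: hK; apply: contraLR => /prim_of_notK [C2 PC2 C2A].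
  have e : Psi @: (Psi' @: C2) = C2 by apply: imsetKK.
  have PC1 : primitive_collection cones1 (Psi' @: C2) by apply/hP; rewrite e.
  apply/negP => hK1; move/negP: (K_prim hK1 PC1); apply.
  by rewrite -(imsetKK A K1); apply: imsetS.
move: hK; apply: contraLR => /prim_of_notK [C1 PC1 C1A].
have PC2 := (proj1 (hP C1) PC1).
apply/negP => hK2; move/negP: (K_prim hK2 PC2); apply; exact: imsetS.
Qed.

Lemma coneR_sub (R : realType) n (I : finType) (u : I -> 'rV[int]_n) (S M : {set I}) :
  S \subset M -> (coneR R u S `<=` coneR R u M)%classic.
Proof.
move=> SM x [a [a0 [aS ->]]]; exists a; split => //; split => // i iM.
apply: aS; apply/negP => iS; move/negP: iM; apply; exact: (fintype.subsetP SM).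
Qed.

Lemma coneR_image (R : realType) n (I1 I2 : finType) (u1 : I1 -> 'rV[int]_n)
  (u2 : I2 -> 'rV[int]_n) (Psi : I1 -> I2) (Psi' : I2 -> I1) (P : 'M[R]_n) :
  cancel Psi Psi' -> cancel Psi' Psi ->
  (forall i, intv R (u1 i) *m P = intv R (u2 (Psi i))) ->
  forall A, image (coneR R u1 A) (fun x => x *m P) = coneR R u2 (Psi @: A).
Proof.
move=> K1 K2 hv A; have bij : {on [pred j | true], bijective Psi}.
  by apply: onW_bij; exists Psi'.
apply/seteqP; split => y.
  case=> x [a [a0 [aS ->]]] <-; exists (fun j => a (Psi' j)); split.
    by move=> j; apply: a0.
  split.
    move=> j jn; apply: aS; apply: contra jn => h.
    by rewrite -[j]K2; apply: imset_f.
  rewrite mulmx_suml (reindex Psi bij) /=; apply: eq_bigr => i _.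
  by rewrite -scalemxAl hv K1.
case=> b [b0 [bS ->]]; exists (\sum_i b (Psi i) *: intv R (u1 i)).
  exists (fun i => b (Psi i)); split => //; split => // i iA.
  apply: bS; apply: contra iA => /imsetP [i' i'A e].
  by rewrite -(K1 i) e K1.
rewrite mulmx_suml (reindex Psi bij) /=; apply: eq_bigr => i _.
by rewrite -scalemxAl hv.
Qed.

Lemma dotK (R : realType) n (P : 'M[R]_n) (x m : 'rV[R]_n) :
  P \in unitmx -> dotR (x *m P) (m *m (invmx P)^T) = dotR x m.
Proof.
move=> Pu; rewrite /dotR trmx_mul trmxK mulmxA mulmxK //.
Qed.

Lemma face_image (R : realType) n (P : 'M[R]_n) (s F : set 'rV[R]_n) :
  P \in unitmx -> is_face s F ->
  is_face (image s (fun x => x *m P)) (image F (fun x => x *m P)).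
Proof.
move=> Pu [m [m0 ->]]; exists (m *m (invmx P)^T); split.
  by move=> y [x sx <-]; rewrite dotK //; apply: m0.
apply/seteqP; split => y.
  case=> x [sx dx] <-; split; first by exists x.
  by rewrite /= dotK.
case=> -[x sx <-] d; exists x => //; split => //.
by move: d; rewrite /= dotK.
Qed.

Lemma core (R : realType) n (I1 I2 : finType) (u1 : I1 -> 'rV[int]_n)
  (u2 : I2 -> 'rV[int]_n) (cones1 : {set {set I1}}) (cones2 : {set {set I2}})
  (Psi : I1 -> I2) (Psi' : I2 -> I1) (P : 'M[R]_n) :
  is_complete_fan R u1 cones1 -> is_complete_fan R u2 cones2 ->
  cancel Psi Psi' -> cancel Psi' Psi -> P \in unitmx ->
  (forall i, intv R (u1 i) *m P = intv R (u2 (Psi i))) ->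
  (forall A, Kb cones1 A = Kb cones2 (Psi @: A)) ->
  forall S, S \in cones1 ->
  exists2 T, T \in cones2 & image (coneR R u1 S) (fun x => x *m P) = coneR R u2 T.
Proof.
move=> F1 F2 K1 K2 Pu hv hK S SC.
case: F1 => _ [_ [_ [_ [_ [_ [Hint1 _]]]]]].
case: F2 => _ [_ [_ [_ [_ [Hface2 _]]]]].
pose p := [pred M : {set I1} | (M \in cones1) && (S \subset M)].
have pS : p S by rewrite /= SC subxx.
case: (arg_maxnP (fun M : {set I1} => #|M|) pS) => M /andP [MC SM] Mmax.
have PM : Psi @: M \in cones2.
  have : Kb cones2 (Psi @: M).
    by rewrite -hK; apply/existsP; exists M; rewrite MC subxx.
  case/existsP => T /andP [TC MT].
  have : Kb cones1 (Psi' @: T).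
    by rewrite hK (imsetKK _ K2); apply/existsP; exists T; rewrite TC subxx.
  case/existsP => S' /andP [S'C TS'].
  have MT' : M \subset Psi' @: T by rewrite -{1}(imsetKK M K1); apply: imsetS.
  have MS' : M \subset S' := fintype.subset_trans MT' TS'.
  have eS' : S' \subset M.
    have le := Mmax S'; rewrite /= S'C (fintype.subset_trans SM MS') in le.
    by rewrite -(geq_leqif (subset_leqif_card MS')); apply: le.
  have TM : T \subset Psi @: M.
    rewrite -(imsetKK T K2); apply: imsetS; exact: fintype.subset_trans TS' eS'.
  have -> : Psi @: M = T by apply/eqP; rewrite finset.eqEsubset MT TM.
  exact: TC.
have [_ hf] := Hint1 S M SC MC.
rewrite setIidl in hf; last exact: coneR_sub.
have := face_image Pu hf; rewrite (coneR_image K1 K2 hv M).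
by move=> /(Hface2 _ _ PM) [T TC e]; exists T.
Qed.

Definition Umat (K : nzRingType) n (J : finType) (w : J -> 'rV[int]_n) : 'M[K]_(#|J|, n) :=
  \matrix_(k, j) intv K (w (enum_val k)) 0 j.

Lemma row_Umat (K : nzRingType) n (J : finType) (w : J -> 'rV[int]_n) (k : 'I_#|J|) :
  row k (Umat K w) = intv K (w (enum_val k)).
Proof. by apply/rowP => j; rewrite !mxE. Qed.

Lemma Umat_comb (K : nzRingType) n (J : finType) (w : J -> 'rV[int]_n) (b : 'rV[K]_#|J|) :
  b *m Umat K w = \sum_j b 0 (enum_rank j) *: intv K (w j).
Proof.
rewrite mulmx_sum_row (reindex (@enum_rank J)) /=; last first.
  by apply: onW_bij; apply: enum_rank_bij.
by apply: eq_bigr => j _; rewrite row_Umat enum_rankK.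
Qed.

Lemma Umat_full (R : realType) n (J : finType) (w : J -> 'rV[int]_n) :
  (forall x : 'rV[R]_n, exists a : J -> R, x = \sum_j a j *: intv R (w j)) ->
  row_full (Umat rat w).
Proof.
move=> hsp.
have e : map_mx (@ratr R) (Umat rat w) = Umat R w.
  by apply/matrixP => k j; rewrite !mxE ratr_int.
rewrite /row_full -(mxrank_map (@ratr R)) e -/(row_full _) -sub1mx.
apply/row_subP => i; have [a ->] := hsp (row i 1%:M).
have -> : \sum_j a j *: intv R (w j) = (\row_k a (enum_val k)) *m Umat R w.
  by rewrite Umat_comb; apply: eq_bigr => j _; rewrite mxE enum_rankK.
exact: submxMl.
Qed.

Lemma intr_sum (K : pzRingType) (J : finType) (F : J -> int) :
  ((\sum_j F j)%:~R : K) = \sum_j (F j)%:~R.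
Proof. by apply: big_morph => // x y; rewrite intrD. Qed.

Lemma intv_sum (K : nzRingType) n (J : finType) (w : J -> 'rV[int]_n) (a : J -> int) :
  intv K (\sum_j a j *: w j) = \sum_j (a j)%:~R *: intv K (w j).
Proof.
apply/matrixP => i k; rewrite !mxE !summxE intr_sum; apply: eq_bigr => j _.
by rewrite !mxE intrM.
Qed.

Lemma intv_eq0 n (v : 'rV[int]_n) : (intv rat v == 0) = (v == 0).
Proof.
apply/eqP/eqP => [h|->]; last by apply/matrixP => i j; rewrite !mxE.
apply/matrixP => i j; have := congr1 (fun M : 'M[rat]_(1, n) => M i j) h; rewrite !mxE.
by move/eqP; rewrite intr_eq0 => /eqP.
Qed.

Lemma clear_den (J : finType) (b : J -> rat) :
  exists d : int, exists a : J -> int, d != 0 /\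
    forall n (w : J -> 'rV[int]_n),
    d%:~R *: (\sum_j b j *: intv rat (w j)) = intv rat (\sum_j a j *: w j).
Proof.
exists (\prod_j denq (b j)), (fun j => numq (b j) * \prod_(k | k != j) denq (b k)).
split.
  by apply/prodf_neq0 => j _; apply: denq_neq0.
move=> n w; rewrite intv_sum scaler_sumr; apply: eq_bigr => j _.
rewrite scalerA (bigD1 j) //= !intrM numqE; congr (_ *: _).
by rewrite mulrC mulrA.
Qed.

Lemma rat_rel n (J : finType) (w1 w2 : J -> 'rV[int]_n) :
  (forall a : J -> int, \sum_j a j *: w1 j = 0 -> \sum_j a j *: w2 j = 0) ->
  forall b : J -> rat, \sum_j b j *: intv rat (w1 j) = 0 -> \sum_j b j *: intv rat (w2 j) = 0.
Proof.
move=> hI b h1.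
have [d [a [d0 e]]] := clear_den b.
have h2 : \sum_j a j *: w2 j = 0.
  apply: hI; apply/eqP; rewrite -intv_eq0 -e h1 scaler0 //.
have : (d%:~R : rat) *: (\sum_j b j *: intv rat (w2 j)) == 0.
  by rewrite e h2 intv_eq0.
by rewrite scaler_eq0 intr_eq0 (negbTE d0) /= => /eqP.
Qed.

Lemma rel_mx n (J : finType) (w1 w2 : J -> 'rV[int]_n) :
  (forall a : J -> int, \sum_j a j *: w1 j = 0 -> \sum_j a j *: w2 j = 0) ->
  forall p (W : 'M[rat]_(p, #|J|)), W *m Umat rat w1 = 0 -> W *m Umat rat w2 = 0.
Proof.
move=> hI p W h; apply/row_matrixP => i; rewrite row_mul row0.
have := congr1 (row i) h; rewrite row_mul row0 !Umat_comb.
exact: rat_rel.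
Qed.

Lemma left_inv n m (U : 'M[rat]_(m, n)) : row_full U -> pinvmx U *m U = 1%:M.
Proof.
rewrite -sub1mx => h; have := mulmxKpV h; by rewrite mul1mx.
Qed.

Lemma solve_mx n m (U1 U2 : 'M[rat]_(m, n)) :
  row_full U1 ->
  (forall p (W : 'M[rat]_(p, m)), W *m U1 = 0 -> W *m U2 = 0) ->
  U1 *m (pinvmx U1 *m U2) = U2.
Proof.
move=> f h.
have : (U1 *m pinvmx U1 - 1%:M) *m U1 = 0.
  by rewrite mulmxBl -mulmxA left_inv // mulmx1 mul1mx subrr.
move/h; rewrite mulmxBl mul1mx => /eqP; rewrite subr_eq0 => /eqP e.
by rewrite -[RHS]e mulmxA.
Qed.

Unset Implicit Arguments.

Theorem proposition5p25 (R : realType) (n : nat) (I1 I2 : finType)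
  (u1 : I1 -> 'rV[int]_n) (u2 : I2 -> 'rV[int]_n)
  (cones1 : {set {set I1}}) (cones2 : {set {set I2}}) (Psi : I1 -> I2) :
  is_complete_fan R u1 cones1 -> is_complete_fan R u2 cones2 ->
  bijective Psi ->
  (forall C : {set I1},
      primitive_collection cones1 C <-> primitive_collection cones2 (Psi @: C)) ->
  (forall a : I1 -> int,
      \sum_i a i *: u1 i = 0 <-> \sum_i a i *: u2 (Psi i) = 0) ->
  exists Phi : 'M[rat]_n,
    Phi \in unitmx /\
    (forall i, intv rat (u1 i) *m Phi = intv rat (u2 (Psi i))) /\
    (forall C : set 'rV[R]_n,
       cone_of u1 cones1 C <->
       cone_of u2 cones2 (image C (fun x => x *m map_mx (@ratr R) Phi))) /\
    (forall b : I1 -> rat,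
       (\sum_i b i *: intv rat (u1 i)) *m Phi = \sum_i b i *: intv rat (u2 (Psi i))) /\
    (forall b : I1 -> rat,
       \sum_i b i *: intv rat (u1 i) = 0 <-> \sum_i b i *: intv rat (u2 (Psi i)) = 0).
Proof.
move=> F1 F2 [Psi' K1 K2] hprim hrel.
pose w2 := fun i => u2 (Psi i).
pose U1 := Umat rat u1; pose U2 := Umat rat w2.
have f1 : row_full U1.
  apply: (@Umat_full R); move=> x.
  case: F1 => _ [_ [_ [_ [_ [_ [_ hcov]]]]]].
  by have [S _ [a [_ [_ ->]]]] := hcov x; exists a.
have f2 : row_full U2.
  apply: (@Umat_full R); move=> x.
  case: F2 => _ [_ [_ [_ [_ [_ [_ hcov]]]]]].
  have [S _ [a [_ [_ ->]]]] := hcov x; exists (fun i => a (Psi i)).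
  rewrite (reindex Psi) //; by apply: onW_bij; exists Psi'.
have r12 : forall p (W : 'M[rat]_(p, #|I1|)), W *m U1 = 0 -> W *m U2 = 0.
  by apply: rel_mx => a /hrel.
have r21 : forall p (W : 'M[rat]_(p, #|I1|)), W *m U2 = 0 -> W *m U1 = 0.
  by apply: rel_mx => a /hrel.
pose Phi := pinvmx U1 *m U2; pose Phi' := pinvmx U2 *m U1.
have hU : U1 *m Phi = U2 by apply: solve_mx.
have hU' : U2 *m Phi' = U1 by apply: solve_mx.
have e1 : Phi *m Phi' = 1%:M.
  by rewrite /Phi -mulmxA hU' left_inv.
have [Pu _] := mulmx1_unit e1.
have hrow : forall i, intv rat (u1 i) *m Phi = intv rat (u2 (Psi i)).
  move=> i; have := congr1 (row (enum_rank i)) hU.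
  by rewrite row_mul !row_Umat enum_rankK.
have hcomb : forall b : I1 -> rat,
    (\sum_i b i *: intv rat (u1 i)) *m Phi = \sum_i b i *: intv rat (u2 (Psi i)).
  by move=> b; rewrite mulmx_suml; apply: eq_bigr => i _; rewrite -scalemxAl hrow.
exists Phi; split => //; split => //; split; last first.
  split => // b; split.
    by apply: rat_rel => a /hrel.
  by apply: rat_rel => a /hrel.
pose P := map_mx (@ratr R) Phi.
have PuR : P \in unitmx by rewrite map_unitmx.
have intvR : forall v : 'rV[int]_n, intv R v = map_mx (@ratr R) (intv rat v).
  by move=> v; apply/matrixP => i j; rewrite !mxE ratr_int.
have hvR : forall i, intv R (u1 i) *m P = intv R (u2 (Psi i)).
  by move=> i; rewrite !intvR -map_mxM hrow.
have hvR' : forall j, intv R (u2 j) *m invmx P = intv R (u1 (Psi' j)).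
  by move=> j; rewrite -{1}(K2 j) -hvR mulmxK.
have hK := Kb_transfer K1 K2 hprim.
have hK' : forall A, Kb cones2 A = Kb cones1 (Psi' @: A).
  by move=> A; rewrite hK (imsetKK A K2).
move=> C; split.
  case=> S SC ->; have [T TC e] := core F1 F2 K1 K2 PuR hvR hK SC.
  by exists T.
case=> T TC e.
have [S SC e'] := core F2 F1 K2 K1 (etrans (unitmx_inv P) PuR) hvR' hK' TC.
exists S => //; rewrite -e' -e.
apply/seteqP; split => x.
  move=> Cx; exists (x *m P); first by exists x.
  by rewrite mulmxK.
by case=> y [z Cz <-] <-; rewrite mulmxK.
Qed.
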